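(* Let $g\in\mathcal M_K$ be given by $g=\beta Q|_{\mathfrak p}+\alpha_1Q|_{\mathfrak k_1}+\cdots+\alpha_{r+s}Q|_{\mathfrak k_{r+s}}$ with $\beta,\alpha_1,\dots,\alpha_{r+s}>0$. Then the scalar curvature of $g$ is $$S(g)=-\frac14\sum_{i=1}^{r+s}\frac{\alpha_i}{\beta^2}d_i(1-\kappa_i)-\frac{n}{2\beta}+\frac14\sum_{i=1}^{r}\frac{d_i\kappa_i}{\alpha_i}.$$
   Context: Let $G$ be a connected non-compact simple Lie group with Lie algebra $\mathfrak g$, $K$ a maximal compact subgroup with Lie algebra $\mathfrak k$, $B$ the Killing form of $\mathfrak g$, and $\mathfrak p$ the $B$-orthogonal complement of $\mathfrak k$ in $\mathfrak g$. Let $Q=B|_{\mathfrak p}-B|_{\mathfrak k}$. Write $\mathfrak k=\mathfrak k_1\oplus\cdots\oplus\mathfrak k_{r+s}$, where $\mathfrak k_1,\dots,\mathfrak k_r$ are the simple ideals of $[\mathfrak k,\mathfrak k]$, $\mathfrak k_{r+1}$ is the centre of $\mathfrak k$, and $s=1$ if the centre is nontrivial, $s=0$ otherwise. Let $n=\dim\mathfrak p$, $d_i=\dim\mathfrak k_i$, and define $\kappa_i$ by $B_i=\kappa_iB|_{\mathfrak k_i}$, $B_i$ the Killing form of $\mathfrak k_i$. Left-invariant tensor fields on $G$ are identified with bilinear forms on $\mathfrak g$; $Q|_{\mathfrak u}$ denotes $Q$ restricted to $\mathfrak u$ and extended by zero on its $Q$-orthogonal complement. $\mathcal M_K$ is the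 set of left-invariant metrics on $G$ naturally reductive with respect to $G\times K$ (acting by $(x,k)y=xyk^{-1}$), which by a theorem of Gordon are exactly the metrics $\beta Q|_{\mathfrak p}+\sum_i\alpha_iQ|_{\mathfrak k_i}$ with all coefficients positive. $S$ denotes scalar curvature. *)

(* Defs.v *)
From mathcomp Require Import all_boot all_order all_algebra.
Set Implicit Arguments. Unset Strict Implicit. Unset Printing Implicit Defensive.
Import Order.TTheory GRing.Theory Num.Theory.
Local Open Scope ring_scope.

Section LieDefs.
Variables (R : realFieldType) (N : nat).

Definition vec := 'I_N -> R.
(* structure constants: [e_i, e_j] = \sum_k c i j k e_k *)
Definition sconst := 'I_N -> 'I_N -> 'I_N -> R.

Definition basis_vec (a : 'I_N) : vec := fun i => (i == a)%:R.

Definition lie_bracket (c : sconst) (X Y : vec) : vec :=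
  fun k => \sum_i \sum_j X i * Y j * c i j k.

Definition is_lie_algebra (c : sconst) : Prop :=
  (forall i j k, c i j k = - c j i k) /\
  (forall i j l m, \sum_k (c i j k * c k l m + c j l k * c k i m + c l i k * c k j m) = 0).

(* matrix of ad X : column j = coordinates of [X, e_j] *)
Definition adm (c : sconst) (X : vec) : 'M[R]_N :=
  \matrix_(k, j) \sum_i X i * c i j k.

Definition killing (c : sconst) (X Y : vec) : R := \tr (adm c X *m adm c Y).

Definition killing_on (c : sconst) (S : pred 'I_N) (X Y : vec) : R :=
  \sum_(a | S a) \sum_(b | S b) adm c X a b * adm c Y b a.

Definition supported (S : pred 'I_N) (X : vec) : Prop := forall a, ~~ S a -> X a = 0.
Definition nonzero (X : vec) : Prop := exists a, X a != 0.

Definition proj (S : pred 'I_N) (X : vec) : vec := fun a => if S a then X a else 0.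

Definition lsubspace (I : vec -> Prop) : Prop :=
  I (fun _ => 0) /\ (forall X Y, I X -> I Y -> I (fun a => X a + Y a)) /\
  (forall (t : R) X, I X -> I (fun a => t * X a)).

Definition ideal_in (c : sconst) (S : pred 'I_N) (I : vec -> Prop) : Prop :=
  (forall X, I X -> supported S X) /\ lsubspace I /\
  (forall X Y, supported S X -> I Y -> I (lie_bracket c X Y)).

Definition simple_in (c : sconst) (S : pred 'I_N) : Prop :=
  (exists X Y, supported S X /\ supported S Y /\ nonzero (lie_bracket c X Y)) /\
  (forall I, ideal_in c S I ->
     (forall X, I X -> forall a, X a = 0) \/ (forall X, supported S X -> I X)).

(* ---- Levi-Civita connection / curvature of a left-invariant metric ----
   The metric is given by its Gram matrix G in the basis (G a b = <e_a,e_b>). *)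
Definition koszul (c : sconst) (G : 'M[R]_N) (a b d : 'I_N) : R :=
  2^-1 * (\sum_k c a b k * G k d - \sum_k c b d k * G k a + \sum_k c d a k * G k b).

(* nabla_{e_a} e_b = \sum_f christ a b f e_f *)
Definition christ (c : sconst) (G : 'M[R]_N) (a b f : 'I_N) : R :=
  \sum_d koszul c G a b d * invmx G d f.

(* R(e_a,e_b) e_d = \sum_f curv a b d f e_f, with
   R(X,Y) = nabla_X nabla_Y - nabla_Y nabla_X - nabla_[X,Y] *)
Definition curv (c : sconst) (G : 'M[R]_N) (a b d f : 'I_N) : R :=
  \sum_h (christ c G b d h * christ c G a h f - christ c G a d h * christ c G b h f)
  - \sum_k c a b k * christ c G k d f.

(* Ric(e_b,e_d) = trace (X |-> R(X,e_b) e_d) *)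
Definition ricci (c : sconst) (G : 'M[R]_N) (b d : 'I_N) : R :=
  \sum_a curv c G a b d a.

Definition scal (c : sconst) (G : 'M[R]_N) : R :=
  \sum_b \sum_d invmx G b d * ricci c G b d.

Definition gram (m : vec -> vec -> R) : 'M[R]_N :=
  \matrix_(a, b) m (basis_vec a) (basis_vec b).

End LieDefs.

(* Main.v *)
Require Import Defs.
From mathcomp Require Import all_boot all_order all_algebra.
From mathcomp Require Import ring lra zify.
Import Order.TTheory GRing.Theory Num.Theory.
Local Open Scope ring_scope.
Set Implicit Arguments. Unset Strict Implicit. Unset Printing Implicit Defensive.

Lemma big_opt (R : nmodType) (T : finType) (F : option T -> R) :
  \sum_(o : option T) F o = F None + \sum_i F (Some i).
Proof.
rewrite (bigD1 None) //=; congr (_ + _).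
rewrite (reindex_omap Some id); last by case.
apply: eq_bigl => i /=. by rewrite eqxx.
Qed.

Section Lie.
Variables (R : realFieldType) (N : nat) (c : sconst R N).
Hypothesis Lie : is_lie_algebra c.

Local Notation e := (@basis_vec R N).

Lemma sum_e (a : 'I_N) (F : 'I_N -> R) : \sum_i e a i * F i = F a.
Proof.
rewrite (bigD1 a) //= /basis_vec eqxx mul1r big1 ?addr0 // => i /negbTE ->.
by rewrite mul0r.
Qed.

Lemma sum_e' (a : 'I_N) (F : 'I_N -> R) : \sum_i F i * e a i = F a.
Proof. by rewrite -(sum_e a F); apply: eq_bigr => i _; rewrite mulrC. Qed.

Lemma sum_e2 a b (F : 'I_N -> 'I_N -> R) :
  \sum_x \sum_y e a x * e b y * F x y = F a b.
Proof.
under eq_bigr => x _ do under eq_bigr => y _ do rewrite -mulrA.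
under eq_bigr => x _ do rewrite -mulr_sumr.
by rewrite sum_e sum_e.
Qed.

Definition K a b := killing c (e a) (e b).

Lemma cA a b k : c a b k = - c b a k.
Proof. by case: Lie => H _; apply: H. Qed.

Lemma cJ i j l m : \sum_k (c i j k * c k l m + c j l k * c k i m + c l i k * c k j m) = 0.
Proof. by case: Lie => _ H; apply: H. Qed.

Lemma admE X k j : adm c X k j = \sum_i X i * c i j k.
Proof. by rewrite mxE. Qed.

Lemma adm_e a k j : adm c (e a) k j = c a j k.
Proof. by rewrite admE sum_e. Qed.

Lemma adm_sum X : adm c X = \sum_a X a *: adm c (e a).
Proof.
apply/matrixP => k j; rewrite admE summxE; apply: eq_bigr => a _.
by rewrite mxE adm_e.
Qed.

Lemma killingE X Y : killing c X Y = \sum_a \sum_b X a * Y b * K a b.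
Proof.
rewrite /killing (adm_sum X) (adm_sum Y) mulmx_suml raddf_sum /=.
apply: eq_bigr => a _; rewrite mulmx_sumr raddf_sum /=; apply: eq_bigr => b _.
by rewrite -scalemxAl -scalemxAr !mxtraceZ /K mulrA.
Qed.

Lemma Kexp a b : K a b = \sum_x \sum_y c a y x * c b x y.
Proof.
rewrite /K /killing /mxtrace; apply: eq_bigr => x _; rewrite mxE.
by apply: eq_bigr => y _; rewrite !adm_e.
Qed.

Lemma KC a b : K a b = K b a.
Proof. by rewrite /K /killing mxtrace_mulC. Qed.

Lemma adm_br X Y :
  adm c (lie_bracket c X Y) = adm c X *m adm c Y - adm c Y *m adm c X.
Proof.
apply/matrixP => k j; rewrite !mxE.
have E1 : \sum_i lie_bracket c X Y i * c i j k =
  \sum_p \sum_q X p * Y q * (\sum_i c p q i * c i j k).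
  rewrite /lie_bracket.
  under eq_bigr do rewrite mulr_suml.
  rewrite exchange_big; apply: eq_bigr => p _.
  under eq_bigr do rewrite mulr_suml.
  rewrite exchange_big; apply: eq_bigr => q _.
  by rewrite mulr_sumr; apply: eq_bigr => i _; rewrite mulrA.
have E2 : \sum_m adm c X k m * adm c Y m j =
  \sum_p \sum_q X p * Y q * (\sum_m c p m k * c q j m).
  under eq_bigr do rewrite !admE mulr_suml.
  rewrite exchange_big; apply: eq_bigr => p _.
  under eq_bigr do rewrite mulr_sumr.
  rewrite exchange_big; apply: eq_bigr => q _.
  by rewrite mulr_sumr; apply: eq_bigr => m _; ring.
have E3 : \sum_m adm c Y k m * adm c X m j =
  \sum_p \sum_q X p * Y q * (\sum_m c q m k * c p j m).
  under eq_bigr do rewrite !admE mulr_sumr.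
  rewrite exchange_big; apply: eq_bigr => p _.
  under eq_bigr do rewrite mulr_suml.
  rewrite exchange_big; apply: eq_bigr => q _.
  by rewrite mulr_sumr; apply: eq_bigr => m _; ring.
rewrite E1 E2 E3 -sumrB; apply: eq_bigr => p _; rewrite -sumrB.
apply: eq_bigr => q _; rewrite -mulrBr; congr (_ * _).
have hB : \sum_i c q j i * c i p k = - \sum_m c p m k * c q j m.
  by rewrite -sumrN; apply: eq_bigr => m _; rewrite (cA m p k); ring.
have hC : \sum_i c j p i * c i q k = \sum_m c q m k * c p j m.
  by apply: eq_bigr => m _; rewrite (cA j p m) (cA m q k); ring.
have := cJ p q j k; rewrite !big_split /= hB hC => h.
lra.
Qed.

Lemma killing_inv X Y Z :
  killing c (lie_bracket c X Y) Z = killing c X (lie_bracket c Y Z).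
Proof.
rewrite /killing !adm_br mulmxBl mulmxBr !raddfB /= !mulmxA.
rewrite [\tr (adm c Y *m adm c X *m adm c Z)]mxtrace_mulC mulmxA.
by rewrite [\tr (adm c Z *m adm c Y *m adm c X)]mxtrace_mulC mulmxA.
Qed.

Lemma br_e a b k : lie_bracket c (e a) (e b) k = c a b k.
Proof.
rewrite /lie_bracket.
under eq_bigr => i _ do under eq_bigr => j _ do rewrite -mulrA.
under eq_bigr => i _ do rewrite -mulr_sumr.
by rewrite sum_e sum_e.
Qed.

Definition Om a b d := \sum_k c a b k * K k d.

Lemma killing_e1 X d : killing c X (e d) = \sum_k X k * K k d.
Proof.
rewrite killingE.
under eq_bigr => k _ do under eq_bigr => b _ do rewrite -mulrA.
by under eq_bigr => k _ do rewrite -mulr_sumr sum_e.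
Qed.

Lemma killing_e2 X d : killing c (e d) X = \sum_k X k * K d k.
Proof.
rewrite killingE.
under eq_bigr => k _ do under eq_bigr => b _ do rewrite -mulrA.
under eq_bigr => k _ do rewrite -mulr_sumr.
by rewrite sum_e.
Qed.

Lemma Om_cyc a b d : Om a b d = Om b d a.
Proof.
have := killing_inv (e a) (e b) (e d).
rewrite killing_e1 killing_e2 /Om => E.
transitivity (\sum_k lie_bracket c (e a) (e b) k * K k d).
  by apply: eq_bigr => k _; rewrite br_e.
by rewrite E; apply: eq_bigr => k _; rewrite br_e KC.
Qed.

Lemma Om_12 a b d : Om a b d = - Om b a d.
Proof. by rewrite /Om -sumrN; apply: eq_bigr => k _; rewrite cA mulNr. Qed.

Lemma Om_23 a b d : Om a b d = - Om a d b.
Proof. by rewrite (Om_cyc a d b) (Om_12 d b a) opprK Om_cyc. Qed.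

Variables (r s : nat) (blk : 'I_N -> option 'I_(r + s))
  (kappa alpha : 'I_(r + s) -> R) (beta : R).
Hypothesis hkkp : forall a b k, blk a != None -> blk b != None -> blk k == None -> c a b k = 0.
Hypothesis hkpk : forall a b k, blk a != None -> blk b == None -> blk k != None -> c a b k = 0.
Hypothesis hppp : forall a b k, blk a == None -> blk b == None -> blk k == None -> c a b k = 0.
Hypothesis hKneg : forall X, supported (fun a => blk a != None) X -> nonzero X -> killing c X X < 0.
Hypothesis hKpos : forall X, supported (fun a => blk a == None) X -> nonzero X -> 0 < killing c X X.
Hypothesis hid : forall i a b k, blk a == Some i -> blk b == Some i -> blk k != Some i -> c a b k = 0.
Hypothesis hcomm : forall i j, i != j -> forall a b k, blk a == Some i -> blk b == Some j -> c a b k = 0.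
Hypothesis hsimp : forall i : 'I_(r + s), (i < r)%N -> simple_in c (fun a => blk a == Some i).
Hypothesis hs : (s <= 1)%N.
Hypothesis hcen : forall i : 'I_(r + s), (r <= i)%N ->
     (exists a, blk a == Some i) /\
     (forall a b k, blk a != None -> blk b == Some i -> c a b k = 0).
Hypothesis hkap : forall i X Y, supported (fun a => blk a == Some i) X ->
     supported (fun a => blk a == Some i) Y ->
     killing_on c (fun a => blk a == Some i) X Y = kappa i * killing c X Y.
Hypothesis hbeta : 0 < beta.
Hypothesis halpha : forall i, 0 < alpha i.

Definition adm3 (Z X Y : option 'I_(r + s)) : bool :=
  match Z, X, Y with
  | None, None, Some _ => true
  | None, Some _, None => true
  | Some _, None, None => true
  | Some i, Some j, Some k => (i == j) && (i == k)
  | _, _, _ => false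
  end.

Lemma czero b y x : ~~ adm3 (blk b) (blk x) (blk y) -> c b y x = 0.
Proof.
case Eb: (blk b) => [i|]; case Ex: (blk x) => [j|]; case Ey: (blk y) => [k|] //= H.
- case: (eqVneq i k) => [eik|nik].
    subst k; rewrite eqxx andbT in H.
    by apply: (hid (i:=i)); rewrite ?Eb ?Ey ?Ex //; apply: contra H => /eqP [->].
  by apply: (hcomm nik); rewrite ?Eb ?Ey.
- by apply: hkpk; rewrite ?Eb ?Ey ?Ex.
- by apply: hkkp; rewrite ?Eb ?Ey ?Ex.
- by rewrite cA hkpk ?oppr0 ?Eb ?Ey ?Ex.
- by apply: hppp; rewrite ?Eb ?Ey ?Ex.
Qed.


Lemma K_pk a b : blk a == None -> blk b != None -> K a b = 0.
Proof.
move=> ha hb; rewrite Kexp big1 // => x _; rewrite big1 // => y _.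
have := @czero a y x; have := @czero b x y; rewrite (eqP ha).
move: hb; case: (blk b) => [i|] // _.
case: (blk x) => [j|]; case: (blk y) => [k|] //= h1 h2;
  by [rewrite h1 ?mulr0 | rewrite h2 ?mul0r].
Qed.

Lemma killing0r X Y : (forall k, Y k = 0) -> killing c X Y = 0.
Proof.
move=> hY; rewrite killingE big1 // => a _; rewrite big1 // => b _.
by rewrite hY mulr0 mul0r.
Qed.

Lemma killing0l X Y : (forall k, X k = 0) -> killing c X Y = 0.
Proof.
move=> hX; rewrite killingE big1 // => a _; rewrite big1 // => b _.
by rewrite hX !mul0r.
Qed.

Lemma killingDr Z X Y :
  killing c Z (fun a => X a + Y a) = killing c Z X + killing c Z Y.
Proof.
rewrite !killingE -big_split; apply: eq_bigr => a _.
rewrite -big_split; apply: eq_bigr => b _ /=; ring.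
Qed.

Lemma killingZr Z t X : killing c Z (fun a => t * X a) = t * killing c Z X.
Proof.
rewrite !killingE mulr_sumr; apply: eq_bigr => a _.
rewrite mulr_sumr; apply: eq_bigr => b _ /=; ring.
Qed.

Lemma supp_e (S : pred 'I_N) b : S b -> supported S (e b).
Proof.
move=> hb x hx; rewrite /basis_vec; case: eqP => // exb.
by rewrite exb hb in hx.
Qed.

Lemma br_supp (j : 'I_(r + s)) X Y :
  supported (fun a => blk a == Some j) X -> supported (fun a => blk a == Some j) Y ->
  supported (fun a => blk a == Some j) (lie_bracket c X Y).
Proof.
move=> hX hY k hk; rewrite /lie_bracket big1 // => a _; rewrite big1 // => b _.
case: (boolP (blk a == Some j)) => ha; last by rewrite (hX a ha) !mul0r.
case: (boolP (blk b == Some j)) => hb; last by rewrite (hY b hb) mulr0 mul0r.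
by rewrite (hid ha hb hk) mulr0.
Qed.

Lemma br_comm (i j : 'I_(r + s)) X Y : i != j ->
  supported (fun a => blk a == Some i) X -> supported (fun a => blk a == Some j) Y ->
  forall k, lie_bracket c X Y k = 0.
Proof.
move=> nij hX hY k; rewrite /lie_bracket big1 // => a _; rewrite big1 // => b _.
case: (boolP (blk a == Some i)) => ha; last by rewrite (hX a ha) !mul0r.
case: (boolP (blk b == Some j)) => hb; last by rewrite (hY b hb) mulr0 mul0r.
by rewrite (hcomm nij k ha hb) mulr0.
Qed.

Lemma K_simple (i j : 'I_(r + s)) a b : i != j -> (j < r)%N -> blk a == Some i -> blk b == Some j ->
  K a b = 0.
Proof.
move=> nij hj ha hb.
pose I := fun X => supported (fun x => blk x == Some j) X /\
  forall Z, supported (fun x => blk x == Some i) Z -> killing c Z X = 0.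
have brI : forall X Y, supported (fun x => blk x == Some j) X ->
    supported (fun x => blk x == Some j) Y -> I (lie_bracket c X Y).
  move=> X Y hX hY; split; first exact: br_supp.
  move=> Z hZ; rewrite -killing_inv; apply: killing0l; exact: (br_comm nij hZ hX).
have idl : ideal_in c (fun x => blk x == Some j) I.
  split; first by move=> X [].
  split; last first.
    move=> X Y hX [hY kY]; split; first exact: br_supp.
    move=> Z hZ; rewrite -killing_inv; apply: killing0l; exact: (br_comm nij hZ hX).
  split; first by split=> // Z _; apply: killing0r.
  split.
    move=> X Y [hX kX] [hY kY]; split.
      by move=> a' ha'; rewrite hX // hY // addr0.
    by move=> Z hZ; rewrite killingDr kX // kY // addr0.
  move=> t X [hX kX]; split.
    by move=> a' ha'; rewrite hX // mulr0.
  by move=> Z hZ; rewrite killingZr kX // mulr0.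
case: (hsimp hj) => [[X0 [Y0 [hX0 [hY0 [a0 na0]]]]]] /(_ I idl) [h0|hall].
  have := h0 _ (brI _ _ hX0 hY0) a0 => E.
  by rewrite E eqxx in na0.
have [_ hk] := hall (e b) (supp_e hb).
exact: hk (supp_e ha).
Qed.

Lemma K_kk (i j : 'I_(r + s)) a b : i != j -> blk a == Some i -> blk b == Some j -> K a b = 0.
Proof.
move=> nij ha hb.
case: (ltnP j r) => hj; first exact: (K_simple nij).
case: (ltnP i r) => hi.
  by rewrite KC; apply: (K_simple (i:=j) (j:=i)) => //; rewrite eq_sym.
exfalso; move/eqP: nij; apply; apply: val_inj.
have := ltn_ord i; have := ltn_ord j => h1 h2; have E : nat_of_ord i = nat_of_ord j by lia.
exact: E.
Qed.

Lemma Kblk a b : blk a != blk b -> K a b = 0.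
Proof.
case Ea: (blk a) => [i|]; case Eb: (blk b) => [j|] // H.
- by apply: (K_kk (i:=i) (j:=j)); rewrite ?Ea ?Eb //; apply: contra H => /eqP ->.
- by rewrite KC; apply: K_pk; rewrite ?Ea ?Eb.
- by apply: K_pk; rewrite ?Ea ?Eb.
Qed.


Definition mu (a : 'I_N) : R := if blk a is Some i then - alpha i else beta.

Lemma mu_neq0 a : mu a != 0.
Proof.
rewrite /mu; case: (blk a) => [i|]; last by rewrite gt_eqF.
by rewrite oppr_eq0 gt_eqF.
Qed.

Lemma Kmu a b : mu a * K a b = mu b * K a b.
Proof.
case: (eqVneq (blk a) (blk b)) => E; first by rewrite /mu E.
by rewrite Kblk // !mulr0.
Qed.

Definition Qp X Y := killing c (proj (fun a => blk a == None) X)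
   (proj (fun a => blk a == None) Y).
Definition Qk i X Y := - killing c (proj (fun a => blk a == Some i) X)
   (proj (fun a => blk a == Some i) Y).
Definition gmet X Y := beta * Qp X Y + \sum_i alpha i * Qk i X Y.
Definition G := gram gmet.

Lemma killing_proj (S : pred 'I_N) X Y : killing c (proj S X) (proj S Y) =
  \sum_a \sum_b X a * Y b * (if S a && S b then K a b else 0).
Proof.
rewrite killingE; apply: eq_bigr => a _; apply: eq_bigr => b _.
rewrite /proj; case: (S a); case: (S b) => /=; ring.
Qed.

Lemma sum_alpha a b x : \sum_i alpha i * - (if (blk a == Some i) && (blk b == Some i)
  then x else 0) = if blk a == blk b then if blk a is Some i then - alpha i * x else 0 else 0.
Proof.
case Ea: (blk a) => [i0|].
  rewrite (bigD1 i0) //= eqxx /= big1 ?addr0.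
    by rewrite eq_sym; case: eqP => _; rewrite ?oppr0 ?mulr0 // mulrN mulNr.
  move=> i ni; have -> : (Some i0 == Some i) = false by apply/eqP => -[E]; rewrite E eqxx in ni.
  by rewrite /= oppr0 mulr0.
rewrite big1; first by case: (None == blk b).
by move=> i _ /=; rewrite oppr0 mulr0.
Qed.

Lemma mulN_sum2 (t : R) (g : 'I_N -> 'I_N -> R) :
  t * - \sum_a \sum_b g a b = \sum_a \sum_b t * - g a b.
Proof.
rewrite -sumrN mulr_sumr; apply: eq_bigr => a _.
by rewrite -sumrN mulr_sumr.
Qed.

Lemma Qk_exp X Y : \sum_i alpha i * Qk i X Y =
  \sum_a \sum_b X a * Y b * \sum_i alpha i * - (if (blk a == Some i) && (blk b == Some i)
      then K a b else 0).
Proof.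
rewrite /Qk.
under eq_bigr do rewrite killing_proj mulN_sum2.
rewrite exchange_big; apply: eq_bigr => a _.
rewrite exchange_big; apply: eq_bigr => b _.
by rewrite mulr_sumr; apply: eq_bigr => i _; rewrite !mulrN mulrCA.
Qed.

Lemma gmetE X Y : gmet X Y =
  \sum_a \sum_b X a * Y b * (if blk a == blk b then mu a * K a b else 0).
Proof.
rewrite /gmet Qk_exp /Qp killing_proj mulr_sumr -big_split; apply: eq_bigr => a _ /=.
rewrite mulr_sumr -big_split; apply: eq_bigr => b _ /=.
rewrite sum_alpha /mu.
case Ea: (blk a) => [i|]; case Eb: (blk b) => [j|] //=.
- case: eqP => _; ring.
- ring.
- ring.
- ring.
Qed.

Lemma Gent a b : G a b = mu a * K a b.
Proof.
rewrite /G mxE gmetE sum_e2.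
case: eqP => E; first by [].
by rewrite Kblk ?mulr0 //; apply/eqP.
Qed.

Lemma Gsym a b : G a b = G b a.
Proof. by rewrite !Gent Kmu KC. Qed.

Lemma nz_dec (Y : vec R N) : nonzero Y \/ (forall k, Y k = 0).
Proof.
case: (boolP [exists k, Y k != 0]) => [/existsP [k hk]|/existsPn H].
  by left; exists k.
by right=> k; move: (H k); rewrite negbK => /eqP.
Qed.

Lemma Qp_ge0 X : 0 <= Qp X X /\ (Qp X X = 0 -> forall a, blk a == None -> X a = 0).
Proof.
rewrite /Qp; set Y := proj _ X.
have sY : supported (fun a => blk a == None) Y.
  by move=> a; rewrite /Y /proj => /negbTE ->.
case: (nz_dec Y) => [nz|z].
  have h := hKpos sY nz; split; first exact: ltW.
  by move=> E; rewrite E ltxx in h.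
split; first by rewrite killing0r.
by move=> _ a ha; move: (z a); rewrite /Y /proj ha.
Qed.

Lemma Qk_ge0 i X : 0 <= Qk i X X /\ (Qk i X X = 0 -> forall a, blk a == Some i -> X a = 0).
Proof.
rewrite /Qk; set Y := proj _ X.
have sY : supported (fun a => blk a != None) Y.
  by move=> a; rewrite negbK /Y /proj => /eqP ->.
case: (nz_dec Y) => [nz|z].
  have h := hKneg sY nz; split; first by rewrite oppr_ge0 ltW.
  by move/eqP; rewrite oppr_eq0 => /eqP E; rewrite E ltxx in h.
split; first by rewrite killing0r ?oppr0.
by move=> _ a ha; move: (z a); rewrite /Y /proj ha.
Qed.

Lemma Gif a b : (if blk a == blk b then mu a * K a b else 0) = G a b.
Proof. by rewrite Gent; case: eqP => // /eqP E; rewrite Kblk ?mulr0. Qed.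

Lemma G_unit : G \in unitmx.
Proof.
rewrite -row_free_unit; apply: inj_row_free => v hv.
pose X := fun a => v 0 a.
have E : gmet X X = 0.
  rewrite gmetE.
  under eq_bigr do under eq_bigr do rewrite Gif.
  rewrite exchange_big big1 // => b _.
  have : (v *m G) 0 b = 0 by rewrite hv mxE.
  rewrite mxE => h; transitivity (X b * \sum_a v 0 a * G a b); last by rewrite h mulr0.
  by rewrite mulr_sumr; apply: eq_bigr => a _; rewrite /X; ring.
have [p0 pz] := Qp_ge0 X.
have hk := fun i => Qk_ge0 i X.
have S0 : 0 <= \sum_i alpha i * Qk i X X.
  by apply: sumr_ge0 => i _; apply: mulr_ge0; [exact: ltW | exact: (hk i).1].
have B0 : 0 <= beta * Qp X X by rewrite mulr_ge0 // ltW.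
move/eqP: E; rewrite /gmet (paddr_eq0 B0 S0) => /andP [E1 E2].
move: E1; rewrite mulf_eq0 gt_eqF //= => /eqP E1.
have E3 := psumr_eq0P (fun i _ => mulr_ge0 (ltW (halpha i)) (hk i).1) (eqP E2).
apply/rowP => a; rewrite mxE.
case Ea: (blk a) => [i|].
  have := E3 i isT; move/eqP; rewrite mulf_eq0 gt_eqF //= => /eqP Ei.
  by apply: (hk i).2 => //; rewrite Ea.
by apply: pz => //; rewrite Ea.
Qed.

Definition H := invmx G.

Lemma GHe a b : \sum_w G a w * H w b = e b a.
Proof.
have := mulmxV G_unit; move/matrixP => /(_ a b); rewrite !mxE => ->.
by rewrite /basis_vec eq_sym.
Qed.

Lemma HGe a b : \sum_w H a w * G w b = e b a.
Proof.
have := mulVmx G_unit; move/matrixP => /(_ a b); rewrite !mxE => ->.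
by rewrite /basis_vec eq_sym.
Qed.

Lemma Hsym a b : H a b = H b a.
Proof.
have GT : G^T = G by apply/matrixP => x y; rewrite mxE Gsym.
have : H^T = H by rewrite /H trmx_inv GT.
by move/matrixP => /(_ b a); rewrite mxE.
Qed.

Lemma Hblk a b : blk a != blk b -> H a b = 0.
Proof.
move=> nab.
pose P := diag_mx (\row_x ((blk x == blk b)%:R : R)).
have GP : G *m P = P *m G.
  apply/matrixP => x y; rewrite mul_mx_diag mul_diag_mx !mxE.
  case: (eqVneq (blk x) (blk y)) => Exy; first by rewrite Exy mulrC.
  have Gd : gmet (e x) (e y) = G x y by rewrite /G mxE.
  by rewrite Gd -Gif (negbTE Exy) mul0r mulr0.
have HP : H *m P = P *m H.
  rewrite -[H *m P]mulmx1 -(mulmxV G_unit) mulmxA -(mulmxA H P) -GP.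
  by rewrite !mulmxA (mulVmx G_unit) mul1mx -/H.
move/matrixP: HP => /(_ a b); rewrite mul_mx_diag mul_diag_mx !mxE eqxx.
by rewrite (negbTE nab) mulr1 mul0r.
Qed.

Lemma muH a b : mu a * H a b = mu b * H a b.
Proof.
case: (eqVneq (blk a) (blk b)) => E; first by rewrite /mu E.
by rewrite Hblk // !mulr0.
Qed.

Lemma c_Om x y z : c x y z = \sum_w Om x y w * mu w * H w z.
Proof.
transitivity (\sum_k c x y k * \sum_w G k w * H w z); last first.
  rewrite /Om; under eq_bigr do rewrite mulr_sumr.
  rewrite exchange_big; apply: eq_bigr => w _.
  rewrite !mulr_suml; apply: eq_bigr => k _.
  by rewrite Gent Kmu; ring.
by under eq_bigr do rewrite GHe; rewrite sum_e'.
Qed.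


Definition gam a b f := 2^-1 * c a b f * (1 + (mu b - mu a) / mu f).

Lemma cG a b d : \sum_k c a b k * G k d = mu d * Om a b d.
Proof.
rewrite /Om mulr_sumr; apply: eq_bigr => k _.
by rewrite Gent Kmu; ring.
Qed.

Lemma koszul_gam a b d : koszul c G a b d = \sum_f gam a b f * G f d.
Proof.
have E : forall f, gam a b f * G f d =
    2^-1 * (c a b f * G f d) + 2^-1 * (mu b - mu a) * (c a b f * K f d).
  move=> f; rewrite /gam Gent; have := mu_neq0 f => hf; field.
  by rewrite hf.
under eq_bigr do rewrite E.
rewrite big_split /= -!mulr_sumr cG -/(Om a b d) /koszul cG cG cG.
have h2 : Om d a b = Om a b d by rewrite -Om_cyc -Om_cyc.
rewrite -(Om_cyc a b d) h2; ring.
Qed.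

Lemma christE a b f : christ c G a b f = gam a b f.
Proof.
rewrite /christ -/H.
under eq_bigr do rewrite koszul_gam mulr_suml.
rewrite exchange_big /=.
under eq_bigr do under eq_bigr do rewrite -mulrA.
under eq_bigr do rewrite -mulr_sumr GHe.
by rewrite sum_e'.
Qed.

Lemma Om_13 w h a : Om w h a = - Om a h w.
Proof. by rewrite (Om_cyc w h a) (Om_23 h a w) -Om_cyc. Qed.

Lemma tau0 h : \sum_a gam a h a = 0.
Proof.
have E : forall a, gam a h a = 2^-1 * mu h * \sum_w Om a h w * H w a.
  move=> a; rewrite /gam c_Om.
  have -> : 1 + (mu h - mu a) / mu a = mu h / mu a.
    by have := mu_neq0 a => ha; field.
  rewrite mulr_sumr mulr_suml mulr_sumr; apply: eq_bigr => w _.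
  rewrite -(mulrA (Om a h w)) muH.
  by have := mu_neq0 a => ha; field.
under eq_bigr do rewrite E.
rewrite -mulr_sumr.
set S := \sum_a _.
suff -> : S = 0 by rewrite mulr0.
have : S = - S.
  rewrite {1}/S exchange_big /S -sumrN; apply: eq_bigr => a _.
  rewrite -sumrN; apply: eq_bigr => w _.
  by rewrite Om_13 Hsym mulNr.
move=> h2; lra.
Qed.

Lemma curvE a b d f : curv c G a b d f =
  \sum_h (gam b d h * gam a h f - gam a d h * gam b h f) - \sum_k c a b k * gam k d f.
Proof.
rewrite /curv; congr (_ - _).
  by apply: eq_bigr => h _; rewrite !christE.
by apply: eq_bigr => k _; rewrite christE.
Qed.

Definition Wf b d x y :=
  (1 + (mu d - mu x) / mu y) * (1 + (mu y - mu b) / mu x) / 4 - (1 + (mu d - mu x) / mu y) / 2.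

Lemma ricciE b d : ricci c G b d = \sum_x \sum_y c b y x * c d x y * Wf b d x y.
Proof.
rewrite /ricci.
under eq_bigr do rewrite curvE sumrB.
rewrite big_split /= sumrB.
have -> : \sum_a \sum_h gam b d h * gam a h a = 0.
  rewrite exchange_big big1 // => h _.
  by rewrite -mulr_sumr tau0 mulr0.
rewrite sub0r -sumrN.
under [X in _ + X]eq_bigr => i _ do rewrite -sumrN.
rewrite [X in _ + X]exchange_big -big_split /=; apply: eq_bigr => x _.
rewrite -sumrN -big_split /=; apply: eq_bigr => y _.
rewrite /gam /Wf (cA x d y) (cA y b x).
have := mu_neq0 x; have := mu_neq0 y => hy hx.
field.
by rewrite hx hy.
Qed.

Definition muB (Z : option 'I_(r + s)) : R := if Z is Some i then - alpha i else beta.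

Definition WB Z X Y :=
  (1 + (muB Z - muB X) / muB Y) * (1 + (muB Y - muB Z) / muB X) / 4
  - (1 + (muB Z - muB X) / muB Y) / 2.

Definition ip (X Y : option 'I_(r + s)) b d :=
  \sum_(x | blk x == X) \sum_(y | blk y == Y) c b y x * c d x y.

Definition sig Z X Y := \sum_(b | blk b == Z) \sum_d H b d * ip X Y b d.

Lemma part_sum (F : 'I_N -> R) : \sum_x F x = \sum_X \sum_(x | blk x == X) F x.
Proof. by rewrite (partition_big blk predT). Qed.

Lemma ip_full b d (W : option 'I_(r + s) -> option 'I_(r + s) -> R) :
  \sum_x \sum_y c b y x * c d x y * W (blk x) (blk y) =
  \sum_X \sum_Y W X Y * ip X Y b d.
Proof.
rewrite part_sum; apply: eq_bigr => X _.
under eq_bigr do rewrite part_sum.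
rewrite exchange_big; apply: eq_bigr => Y _.
rewrite /ip mulr_sumr; apply: eq_bigr => x /eqP hx.
rewrite mulr_sumr; apply: eq_bigr => y /eqP hy.
by rewrite hx hy mulrC.
Qed.

Lemma sum4_swap (P : pred 'I_N)
   (F : 'I_N -> 'I_N -> option 'I_(r + s) -> option 'I_(r + s) -> R) :
  \sum_(b | P b) \sum_d \sum_X \sum_Y F b d X Y =
  \sum_X \sum_Y \sum_(b | P b) \sum_d F b d X Y.
Proof.
under eq_bigr do rewrite exchange_big.
rewrite exchange_big; apply: eq_bigr => X _.
under eq_bigr do rewrite exchange_big.
by rewrite exchange_big.
Qed.

Lemma scal_sig : scal c G = \sum_Z \sum_X \sum_Y WB Z X Y * sig Z X Y.
Proof.
rewrite /scal -/H.
have E : forall b d, H b d * ricci c G b d =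
    H b d * \sum_X \sum_Y WB (blk b) X Y * ip X Y b d.
  move=> b d; rewrite ricciE -ip_full.
  case: (eqVneq (blk b) (blk d)) => Ebd; last by rewrite Hblk // !mul0r.
  congr (_ * _); apply: eq_bigr => x _; apply: eq_bigr => y _.
  by rewrite /Wf /WB /mu Ebd.
under eq_bigr do under eq_bigr do rewrite E.
rewrite part_sum; apply: eq_bigr => Z _.
have E2 : \sum_(b | blk b == Z) \sum_d H b d * (\sum_X \sum_Y WB (blk b) X Y * ip X Y b d)
  = \sum_(b | blk b == Z) \sum_d \sum_X \sum_Y WB Z X Y * (H b d * ip X Y b d).
  apply: eq_bigr => b /eqP hb; apply: eq_bigr => d _.
  rewrite mulr_sumr; apply: eq_bigr => X _.
  rewrite mulr_sumr; apply: eq_bigr => Y _.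
  by rewrite hb; ring.
rewrite E2 sum4_swap; apply: eq_bigr => X _; apply: eq_bigr => Y _.
rewrite /sig mulr_sumr; apply: eq_bigr => b _.
by rewrite mulr_sumr.
Qed.

Lemma sig_zero Z X Y : ~~ adm3 Z X Y -> sig Z X Y = 0.
Proof.
move=> nz; rewrite /sig big1 // => b /eqP hb; rewrite big1 // => d _.
rewrite /ip big1 ?mulr0 // => x /eqP hx; rewrite big1 // => y /eqP hy.
by rewrite czero ?mul0r // hb hx hy.
Qed.

Lemma HK b : \sum_d H b d * K b d = (mu b)^-1.
Proof.
have E : forall d, H b d * K b d = (mu b)^-1 * (H b d * G d b).
  move=> d; rewrite Gent Kmu KC; have := mu_neq0 b => hb; field.
  by rewrite hb.
under eq_bigr do rewrite E.
by rewrite -mulr_sumr HGe /basis_vec eqxx mulr1.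
Qed.

Lemma sig_row Z : \sum_X \sum_Y sig Z X Y = \sum_(b | blk b == Z) (mu b)^-1.
Proof.
rewrite /sig.
rewrite -(sum4_swap _ (fun b d X Y => H b d * ip X Y b d)); apply: eq_bigr => b _.
rewrite -HK; apply: eq_bigr => d _ /=.
under eq_bigr do rewrite -mulr_sumr.
rewrite -mulr_sumr; congr (_ * _).
rewrite Kexp.
have := ip_full b d (fun _ _ => 1).
under eq_bigr do under eq_bigr do rewrite mulr1.
move=> ->; apply: eq_bigr => X _; apply: eq_bigr => Y _; by rewrite mul1r.
Qed.

Lemma ip_kon (S : pred 'I_N) b d : killing_on c S (e b) (e d) =
  \sum_(x | S x) \sum_(y | S y) c b y x * c d x y.
Proof. by apply: eq_bigr => x _; apply: eq_bigr => y _; rewrite !adm_e. Qed.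

Lemma sig_iii i : sig (Some i) (Some i) (Some i) =
  kappa i * \sum_(b | blk b == Some i) (mu b)^-1.
Proof.
rewrite /sig mulr_sumr; apply: eq_bigr => b hb.
rewrite -HK mulr_sumr; apply: eq_bigr => d _.
case: (eqVneq (blk d) (Some i)) => hd; last first.
  by rewrite Hblk ?mul0r ?mulr0 // (eqP hb) eq_sym.
rewrite /ip -ip_kon hkap; last 2 first.
- exact: supp_e.
- by apply: supp_e; rewrite hd.
by rewrite -/(K b d); ring.
Qed.

Lemma if_sum (P : bool) (F : 'I_N -> R) :
  (if P then \sum_d F d else 0) = \sum_d (if P then F d else 0).
Proof. by case: P; rewrite // big1. Qed.

Lemma HZ (Z : option 'I_(r + s)) b d (x : R) :
  (if blk b == Z then H b d * x else 0) = (if blk d == Z then H b d * x else 0).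
Proof.
case: (eqVneq (blk b) (blk d)) => E; first by rewrite E.
by rewrite Hblk // mul0r; case: ifP; case: ifP.
Qed.

Lemma sig_mk Z X Y : sig Z X Y =
  \sum_b \sum_d (if blk b == Z then H b d * ip X Y b d else 0).
Proof. by rewrite /sig big_mkcond; apply: eq_bigr => b _; rewrite if_sum. Qed.

Lemma ip_swap X Y b d : ip X Y d b = ip Y X b d.
Proof.
rewrite /ip exchange_big; apply: eq_bigr => x _; apply: eq_bigr => y _.
by rewrite mulrC.
Qed.

Lemma sig_sym Z X Y : sig Z X Y = sig Z Y X.
Proof.
rewrite !sig_mk.
under eq_bigr do under eq_bigr do rewrite HZ.
rewrite exchange_big; apply: eq_bigr => b _; apply: eq_bigr => d _.
by rewrite Hsym ip_swap.
Qed.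

Lemma kappa_cen (i : 'I_(r + s)) : (r <= i)%N -> kappa i = 0.
Proof.
move=> hi; have [[a ha] hc] := hcen hi.
have hk := hkap (supp_e ha) (supp_e ha).
rewrite ip_kon big1 in hk; last first.
  move=> x _; rewrite big1 // => y hy.
  by rewrite hc ?mul0r // (eqP ha).
have neg : killing c (e a) (e a) < 0.
  apply: hKneg.
    by move=> x; rewrite negbK => /eqP hx; rewrite /basis_vec; case: eqP => // E;
      rewrite E (eqP ha) in hx.
  by exists a; rewrite /basis_vec eqxx oner_eq0.
move/eqP: hk; rewrite eq_sym mulf_eq0 => /orP [/eqP //|].
by move=> /eqP E; rewrite E ltxx in neg.
Qed.

Definition ind (P : bool) : R := P%:R.

Lemma ind_filter (P : pred 'I_N) (F : 'I_N -> R) :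
  \sum_(i | P i) F i = \sum_i ind (P i) * F i.
Proof.
rewrite big_mkcond; apply: eq_bigr => i _; rewrite /ind.
by case: (P i); rewrite ?mul1r ?mul0r.
Qed.

Lemma indH (Z : option 'I_(r + s)) b d :
  ind (blk b == Z) * H b d = ind (blk d == Z) * H b d.
Proof.
case: (eqVneq (blk b) (blk d)) => E; first by rewrite E.
by rewrite Hblk // !mulr0.
Qed.

Lemma indmu (Z : option 'I_(r + s)) a :
  ind (blk a == Z) * mu a = ind (blk a == Z) * muB Z.
Proof. by rewrite /ind /mu; case: eqP => [->|_]; rewrite ?mul0r. Qed.

Lemma rot3 (G3 : 'I_N -> 'I_N -> 'I_N -> R) :
  \sum_i \sum_j \sum_k G3 i j k = \sum_j \sum_k \sum_i G3 i j k.
Proof.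
rewrite exchange_big; apply: eq_bigr => j _.
by rewrite exchange_big.
Qed.

Lemma rev4 (F : 'I_N -> 'I_N -> 'I_N -> 'I_N -> R) :
  \sum_b \sum_d \sum_x \sum_y F b d x y = \sum_y \sum_x \sum_d \sum_b F b d x y.
Proof.
rewrite rot3 /=.
under eq_bigr => d _ do rewrite -(rot3 (fun y x b => F b d x y)).
rewrite exchange_big; apply: eq_bigr => y _.
by rewrite exchange_big.
Qed.

Lemma TS u v ee : mu u * - (\sum_a H u a * c ee a v) = \sum_a mu a * c ee a u * H a v.
Proof.
have L : \sum_a H u a * c ee a v = \sum_a \sum_w H u a * Om ee a w * mu w * H w v.
  apply: eq_bigr => a _; rewrite c_Om mulr_sumr; apply: eq_bigr => w _; ring.
have Rr : \sum_a mu a * c ee a u * H a v =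
    mu u * \sum_a \sum_w mu a * Om ee a w * H w u * H a v.
  rewrite mulr_sumr; apply: eq_bigr => a _; rewrite c_Om !mulr_sumr mulr_suml.
  apply: eq_bigr => w _; rewrite -(mulrA (Om ee a w)) muH; ring.
rewrite L Rr; congr (_ * _).
rewrite -sumrN exchange_big; apply: eq_bigr => a _.
rewrite -sumrN; apply: eq_bigr => w _.
by rewrite (Om_23 ee w a) (Hsym a u); ring.
Qed.

Lemma swapF1 j : sig None None (Some j) =
  \sum_b \sum_d \sum_x \sum_y (ind (blk d == None) * H b d) *
    (ind (blk x == None) * ind (blk y == Some j) * c b y x * c d x y).
Proof.
rewrite /sig ind_filter; apply: eq_bigr => b _; rewrite mulr_sumr; apply: eq_bigr => d _.
rewrite /ip ind_filter mulr_sumr mulr_sumr; apply: eq_bigr => x _.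
rewrite ind_filter mulr_sumr mulr_sumr mulr_sumr; apply: eq_bigr => y _.
transitivity ((ind (blk b == None) * H b d) *
    (ind (blk x == None) * ind (blk y == Some j) * c b y x * c d x y)); first ring.
by rewrite indH.
Qed.

Lemma swapF3 j : beta * sig None None (Some j) =
  \sum_y \sum_x \sum_d (ind (blk y == Some j) * ind (blk x == None) * c d x y) *
    (ind (blk d == None) * \sum_a mu a * c y a d * H a x).
Proof.
rewrite swapF1 rev4 mulr_sumr; apply: eq_bigr => y _.
rewrite mulr_sumr; apply: eq_bigr => x _.
rewrite mulr_sumr; apply: eq_bigr => d _.
rewrite -(TS d x y).
have E := indmu None d; rewrite /= in E.
transitivity (ind (blk y == Some j) * ind (blk x == None) * c d x y *
   ((ind (blk d == None) * beta) * - \sum_b H d b * c y b x)).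
  rewrite -sumrN !mulr_sumr; apply: eq_bigr => b _.
  by rewrite (Hsym d b) (cA y b x); ring.
by rewrite -E; ring.
Qed.

Lemma swapF4 j : beta * sig None None (Some j) =
  beta * \sum_y \sum_d \sum_a (ind (blk y == Some j) * ind (blk d == None) *
     ind (blk a == None) * c y a d) * \sum_x H a x * c d x y.
Proof.
rewrite swapF3 mulr_sumr; apply: eq_bigr => y _.
under eq_bigr => x _ do under eq_bigr => d _ do rewrite mulr_sumr mulr_sumr.
rewrite rot3 mulr_sumr; apply: eq_bigr => d _; rewrite mulr_sumr; apply: eq_bigr => a _.
rewrite !mulr_sumr; apply: eq_bigr => x _.
transitivity (ind (blk y == Some j) * ind (blk d == None) * c y a d * c d x y *
   ((ind (blk x == None) * H a x) * mu a)); first ring.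
rewrite -(indH None a x).
transitivity (ind (blk y == Some j) * ind (blk d == None) * c y a d * c d x y *
   H a x * (ind (blk a == None) * mu a)); first ring.
by rewrite indmu /=; ring.
Qed.

Lemma swapF5 j : beta * \sum_y \sum_d \sum_a (ind (blk y == Some j) * ind (blk d == None) *
     ind (blk a == None) * c y a d) * \sum_x H a x * c d x y =
  alpha j * \sum_y \sum_d \sum_a \sum_z (ind (blk y == Some j) * ind (blk d == None) *
     ind (blk a == None) * c y a d * c d z a * H z y).
Proof.
rewrite !mulr_sumr; apply: eq_bigr => y _.
rewrite !mulr_sumr; apply: eq_bigr => d _.
rewrite !mulr_sumr; apply: eq_bigr => a _.
have T := TS a y d.
transitivity (- (ind (blk y == Some j) * ind (blk d == None) * c y a d) *
   (ind (blk a == None) * (mu a * - \sum_x H a x * c d x y))).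
  by rewrite (mulrA (ind (blk a == None))) indmu /=; ring.
rewrite T !mulr_sumr; apply: eq_bigr => z _.
transitivity (- (ind (blk d == None) * c y a d * ind (blk a == None) * c d z a) *
   ((ind (blk y == Some j) * H z y) * mu z)); first ring.
rewrite -(indH (Some j) z y).
transitivity (- (ind (blk d == None) * c y a d * ind (blk a == None) * c d z a) *
   H z y * (ind (blk z == Some j) * mu z)); first ring.
rewrite indmu /=.
transitivity ((ind (blk d == None) * c y a d * ind (blk a == None) * c d z a) *
   (ind (blk z == Some j) * H z y) * alpha j); first ring.
by rewrite indH; ring.
Qed.

Lemma swapF6 j : sig (Some j) None None =
  - \sum_y \sum_d \sum_a \sum_z (ind (blk y == Some j) * ind (blk d == None) *
     ind (blk a == None) * c y a d * c d z a * H z y).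
Proof.
rewrite /sig ind_filter -sumrN; apply: eq_bigr => y _.
transitivity (\sum_z \sum_d \sum_a ind (blk y == Some j) * H y z *
   (ind (blk d == None) * ind (blk a == None) * c y a d * c z d a)).
  rewrite mulr_sumr; apply: eq_bigr => z _.
  rewrite /ip ind_filter !mulr_sumr; apply: eq_bigr => d _.
  rewrite ind_filter !mulr_sumr; apply: eq_bigr => a _; ring.
rewrite rot3 -sumrN; apply: eq_bigr => d _.
rewrite -sumrN; apply: eq_bigr => a _.
rewrite -sumrN; apply: eq_bigr => z _.
by rewrite (Hsym y z) (cA z d a); ring.
Qed.

Lemma swap j : beta * sig None None (Some j) = - alpha j * sig (Some j) None None.
Proof. by rewrite swapF4 swapF5 swapF6; ring. Qed.

Lemma opt_row_None (f : option 'I_(r + s) -> option 'I_(r + s) -> R) :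
  (forall X Y, ~~ adm3 None X Y -> f X Y = 0) ->
  \sum_X \sum_Y f X Y = \sum_j (f None (Some j) + f (Some j) None).
Proof.
move=> hz; rewrite big_opt big_opt hz // add0r.
rewrite -big_split; apply: eq_bigr => j _ /=; congr (_ + _).
by rewrite big_opt big1 ?addr0 // => k _; apply: hz.
Qed.

Lemma opt_row_Some i (f : option 'I_(r + s) -> option 'I_(r + s) -> R) :
  (forall X Y, ~~ adm3 (Some i) X Y -> f X Y = 0) ->
  \sum_X \sum_Y f X Y = f None None + f (Some i) (Some i).
Proof.
move=> hz; rewrite big_opt big_opt [X in _ + X + _]big1 ?addr0; last first.
  by move=> k _; apply: hz.
congr (_ + _).
under eq_bigr do rewrite big_opt hz // add0r.
rewrite (bigD1 i) //= (bigD1 i) //= big1 ?addr0; last first.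
  by move=> k nk; apply: hz; rewrite /= eqxx /= eq_sym.
rewrite big1 ?addr0 // => j nj; rewrite big1 // => k _.
by apply: hz; rewrite /= eq_sym (negbTE nj).
Qed.

Lemma count_mu Z : \sum_(b | blk b == Z) (mu b)^-1 =
  (muB Z)^-1 * (#|[pred a | blk a == Z]|)%:R.
Proof.
rewrite (eq_bigr (fun _ => (muB Z)^-1)); last by move=> b /eqP hb; rewrite /mu hb.
rewrite (eq_bigl (fun i => i \in [pred a | blk a == Z])) //.
by rewrite sumr_const mulr_natr.
Qed.

Lemma sig_iNN i : sig (Some i) None None =
  (1 - kappa i) * ((- alpha i)^-1 * (#|[pred a | blk a == Some i]|)%:R).
Proof.
have := sig_row (Some i); rewrite (opt_row_Some (i := i) (f := sig (Some i))); last first.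
  by move=> X Y; apply: sig_zero.
rewrite sig_iii !count_mu /= => E.
have -> : sig (Some i) None None = (- alpha i)^-1 * (#|[pred a | blk a == Some i]|)%:R -
  kappa i * ((- alpha i)^-1 * (#|[pred a | blk a == Some i]|)%:R) .
  by rewrite -[X in X - _]E addrK.
ring.
Qed.

Lemma sig_NNj j : sig None None (Some j) =
  (#|[pred a | blk a == Some j]|)%:R * (1 - kappa j) / beta.
Proof.
have := swap j; rewrite sig_iNN => E.
have hb : beta != 0 by rewrite gt_eqF.
have ha : alpha j != 0 by rewrite gt_eqF.
apply: (mulfI hb); rewrite E; field.
by rewrite hb ha.
Qed.

Lemma n_val : (#|[pred a | blk a == None]|)%:R / (2 * beta) =
  \sum_j sig None None (Some j).
Proof.
have := sig_row None; rewrite (opt_row_None (f := sig None)); last first.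
  by move=> X Y; apply: sig_zero.
rewrite count_mu /= => E.
have E2 : \sum_j (sig None None (Some j) + sig None (Some j) None) =
   2 * \sum_j sig None None (Some j).
  by rewrite mulr_sumr; apply: eq_bigr => j _; rewrite (sig_sym None (Some j)); ring.
rewrite E2 in E.
have hb : beta != 0 by rewrite gt_eqF.
have -> : (#|[pred a | blk a == None]|)%:R / (2 * beta) =
   2^-1 * (beta^-1 * (#|[pred a | blk a == None]|)%:R) by field.
by rewrite -E; field.
Qed.

Lemma main : scal c G =
    - 4^-1 * (\sum_i alpha i / beta ^+ 2 * (#|[pred a | blk a == Some i]|)%:R * (1 - kappa i))
    - (#|[pred a | blk a == None]|)%:R / (2 * beta)
    + 4^-1 * (\sum_(i : 'I_(r + s) | (i < r)%N)
         (#|[pred a | blk a == Some i]|)%:R * kappa i / alpha i).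
Proof.
rewrite scal_sig big_opt.
rewrite (opt_row_None (f := fun X Y => WB None X Y * sig None X Y)); last first.
  by move=> X Y h; rewrite sig_zero ?mulr0.
have E1 : forall i, \sum_X \sum_Y WB (Some i) X Y * sig (Some i) X Y =
    WB (Some i) None None * sig (Some i) None None +
    WB (Some i) (Some i) (Some i) * sig (Some i) (Some i) (Some i).
  move=> i; rewrite (opt_row_Some (i := i) (f := fun X Y => WB (Some i) X Y * sig (Some i) X Y)) //.
  by move=> X Y h; rewrite sig_zero ?mulr0.
under [X in _ + X]eq_bigr do rewrite E1.
rewrite n_val.
rewrite (eq_bigr (fun i => (#|[pred a | blk a == Some i]|)%:R * kappa i / alpha i)
   (P := fun i : 'I_(r + s) => (i < r)%N)) //.
rewrite [X in _ + 4^-1 * X](_ : _ = \sum_i (#|[pred a | blk a == Some i]|)%:R * kappa i / alpha i);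
  last first.
  rewrite big_mkcond; apply: eq_bigr => i _; case: ltnP => // hi.
  by rewrite kappa_cen // mulr0 mul0r.
rewrite -big_split /= !mulr_sumr -sumrB -big_split /=; apply: eq_bigr => i _.
rewrite (sig_sym None (Some i) None) sig_NNj sig_iNN sig_iii count_mu /WB /=.
have hb : beta != 0 by rewrite gt_eqF.
have ha : alpha i != 0 by rewrite gt_eqF.
field.
by rewrite hb ha.
Qed.

End Lie.

Theorem corollary3p8 (R : realFieldType) (N r s : nat)
  (c : sconst R N)
  (* block labelling of the basis: Some i <-> e_a in k_{i+1}, None <-> e_a in p *)
  (blk : 'I_N -> option 'I_(r + s))
  (kappa : 'I_(r + s) -> R) (alpha : 'I_(r + s) -> R) (beta : R) :
  (* g is a simple real Lie algebra *)
  is_lie_algebra c ->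
  simple_in c predT ->
  (* Cartan decomposition g = k + p (k = Lie algebra of a maximal compact K) *)
  (forall a b k, blk a != None -> blk b != None -> blk k == None -> c a b k = 0) ->
  (forall a b k, blk a != None -> blk b == None -> blk k != None -> c a b k = 0) ->
  (forall a b k, blk a == None -> blk b == None -> blk k == None -> c a b k = 0) ->
  (forall X, supported (fun a => blk a != None) X -> nonzero X -> killing c X X < 0) ->
  (forall X, supported (fun a => blk a == None) X -> nonzero X -> 0 < killing c X X) ->
  (* G non-compact *)
  (exists a, blk a == None) ->
  (* k = k_1 + ... + k_{r+s}: each k_i is an ideal of k, distinct ones commute *)
  (forall i a b k, blk a == Some i -> blk b == Some i -> blk k != Some i -> c a b k = 0) ->
  (forall i j, i != j -> forall a b k, blk a == Some i -> blk b == Some j -> c a b k = 0) ->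
  (* k_1, ..., k_r are simple *)
  (forall i : 'I_(r + s), (i < r)%N -> simple_in c (fun a => blk a == Some i)) ->
  (* s <= 1, and k_{r+s} (if s = 1) is the non-trivial centre of k *)
  (s <= 1)%N ->
  (forall i : 'I_(r + s), (r <= i)%N ->
     (exists a, blk a == Some i) /\
     (forall a b k, blk a != None -> blk b == Some i -> c a b k = 0)) ->
  (* B_i = kappa_i B|k_i *)
  (forall i X Y, supported (fun a => blk a == Some i) X ->
     supported (fun a => blk a == Some i) Y ->
     killing_on c (fun a => blk a == Some i) X Y = kappa i * killing c X Y) ->
  (* the metric g = beta Q|p + sum_i alpha_i Q|k_i, with Q = B|p - B|k *)
  0 < beta -> (forall i, 0 < alpha i) ->
  let n := #|[pred a | blk a == None]| in
  let d := fun i => #|[pred a | blk a == Some i]| in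
  let Qp := fun X Y => killing c (proj (fun a => blk a == None) X) (proj (fun a => blk a == None) Y) in
  let Qk := fun i X Y => - killing c (proj (fun a => blk a == Some i) X) (proj (fun a => blk a == Some i) Y) in
  let gmet := fun X Y => beta * Qp X Y + \sum_i alpha i * Qk i X Y in
  scal c (gram gmet) =
    - 4^-1 * (\sum_i alpha i / beta ^+ 2 * (d i)%:R * (1 - kappa i))
    - n%:R / (2 * beta)
    + 4^-1 * (\sum_(i : 'I_(r + s) | (i < r)%N) (d i)%:R * kappa i / alpha i).
Proof.
move=> Lie _ hkkp hkpk hppp hKneg hKpos _ hid hcomm hsimp hs hcen hkap hbeta halpha.
move=> n d Qp0 Qk0 gmet0.
exact: (main Lie hkkp hkpk hppp hKneg hKpos hid hcomm hsimp hs hcen hkap hbeta halpha).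
Qed.
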